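(* Let $q=p^h$ with $p$ an odd prime. In ${\rm PG}(4,q)$ with homogeneous coordinates $(X_1,\dots,X_5)$, let $\pi$ be the plane $X_4=X_5=0$, let $\ell$ be the line $X_3=X_4=X_5=0$, let $\omega$ be a primitive element of ${\rm GF}(q)$, and for $1\le i\le q+1$ let $\Pi_i$ be the solid with equation $X_4=\omega^{i-1}X_5$ if $1\le i\le q-1$, $X_4=0$ if $i=q$, and $X_5=0$ if $i=q+1$. Let $a,b,c\in{\rm GF}(q)$ be such that $X^3+aX^2+bX+c$ is irreducible over ${\rm GF}(q)$, and let $G=\{M_{r,s,t}: r,s,t\in{\rm GF}(q)\}$ where $$M_{r,s,t}=\begin{pmatrix}1&0&r&r^2-ar+s&t\\0&1&s&2rs-t&s^2+bs-cr\\0&0&1&2r&2s\\0&0&0&1&0\\0&0&0&0&1\end{pmatrix},$$ acting on the points of ${\rm PG}(4,q)$ (written as column vectors) by left multiplication. Then $G$ has exactly $2q+3$ orbits on the points of ${\rm PG}(4,q)$, namely: (a) $q+1$ orbits of size one, each consisting of a single point of $\ell$; (b) one orbit of size $q^2$, consisting of the points of $\pi\setminus\ell$; (c) $q+1$ orbits of size $q^3$, namely the sets $\Pi_i\setminus\pi$, $1\le i\le q+1$. *)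

(* Defs.v *)
From HB Require Import structures.
From mathcomp Require Import all_boot all_algebra all_field.
Set Implicit Arguments. Unset Strict Implicit. Unset Printing Implicit Defensive.
Import GRing.Theory.
Local Open Scope ring_scope.

(* PG(4,q) over a finite field F: vectors are column vectors 'cV[F]_5,
   coordinates X_1..X_5 are the rows 0..4.  A projective point is
   represented as the set of all nonzero scalar multiples of a nonzero vector. *)
Section PG4.
Variable F : finFieldType.

Definition pt (v : 'cV[F]_5) : {set 'cV[F]_5} :=
  [set k *: v | k in [set k : F | k != 0]].

Definition PGpoints : {set {set 'cV[F]_5}} :=
  [set pt v | v in [set v : 'cV[F]_5 | v != 0]].

Definition ptsOf (P : pred 'cV[F]_5) : {set {set 'cV[F]_5}} :=
  [set X in PGpoints | [forall v in X, P v]].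

Definition X (k : nat) (v : 'cV[F]_5) : F := v (inord k.-1) 0.

Definition piPlane := ptsOf (fun v => (X 4 v == 0) && (X 5 v == 0)).
Definition ellLine :=
  ptsOf (fun v => [&& X 3 v == 0, X 4 v == 0 & X 5 v == 0]).

(* Pi_i for i = 1..q+1, indexed here by j = i-1 : 'I_(q+1) *)
Definition Pisolid (w : F) (j : 'I_#|F|.+1) : {set {set 'cV[F]_5}} :=
  if ((j : nat) < #|F| - 1)%N then ptsOf (fun v => X 4 v == w ^+ j * X 5 v)
  else if (j : nat) == (#|F| - 1)%N then ptsOf (fun v => X 4 v == 0)
  else ptsOf (fun v => X 5 v == 0).

Definition Mrows (a b c r s t : F) : seq (seq F) :=
  [:: [:: 1; 0; r; r ^+ 2 - a * r + s; t];
      [:: 0; 1; s; 2 * r * s - t; s ^+ 2 + b * s - c * r];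
      [:: 0; 0; 1; 2 * r; 2 * s];
      [:: 0; 0; 0; 1; 0];
      [:: 0; 0; 0; 0; 1]].

Definition M (a b c r s t : F) : 'M[F]_5 :=
  \matrix_(i < 5, j < 5) nth 0 (nth [::] (Mrows a b c r s t) i) j.

Definition actPt (g : 'M[F]_5) (P : {set 'cV[F]_5}) : {set 'cV[F]_5} :=
  [set g *m v | v in P].

Definition orbitG (a b c : F) (P : {set 'cV[F]_5}) : {set {set 'cV[F]_5}} :=
  [set actPt (M a b c x.1.1 x.1.2 x.2) P | x : F * F * F].

Definition orbitsG (a b c : F) : {set {set {set 'cV[F]_5}}} :=
  [set orbitG a b c P | P in PGpoints].

End PG4.

(* Main.v *)
Require Import Defs.
From HB Require Import structures.
From mathcomp Require Import all_boot all_algebra all_field.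
From mathcomp Require Import ring lra zify.
Import GRing.Theory.
Local Open Scope ring_scope.

Lemma two_neq0 (F : finFieldType) (p h : nat) :
  prime p -> odd p -> #|F| = (p ^ h)%N -> (2 : F) != 0.
Proof.
move=> pp op HF; have pc := card_finPcharP HF pp.
apply/negP => /eqP H2.
have : (p %| 2)%N by rewrite (dvdn_pcharf pc) H2.
rewrite dvdn_prime2 //; move/eqP => E; by rewrite E in op.
Qed.

Lemma cubic_neq0 (F : fieldType) (a b c m : F) :
  irreducible_poly ('X^3 + a%:P * 'X^2 + b%:P * 'X + c%:P) ->
  m ^+ 3 + a * m ^+ 2 + b * m + c != 0.
Proof.
move=> Hi; apply/negP => /eqP H0.
have hr : root ('X^3 + a%:P * 'X^2 + b%:P * 'X + c%:P) m.
  rewrite rootE !hornerE; apply/eqP; rewrite -H0.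
  by rewrite expr2 mulrA.
rewrite root_factor_theorem in hr.
have [E|E] := irredp_XsubCP Hi hr.
  by move: (eqp_size E); rewrite size_XsubC size_poly1.
move: (eqp_size E); rewrite size_XsubC.
rewrite -addrA -addrA size_addl ?size_polyXn //.
apply: (leq_ltn_trans (size_add _ _)); rewrite gtn_max; apply/andP; split.
  apply: (leq_ltn_trans (size_polyMleq _ _)); rewrite size_polyXn size_polyC; by case: (a != 0).
apply: (leq_ltn_trans (size_add _ _)); rewrite gtn_max; apply/andP; split.
  apply: (leq_ltn_trans (size_polyMleq _ _)); rewrite size_polyX size_polyC; by case: (b != 0).
by rewrite size_polyC; case: (c != 0).
Qed.

Set Implicit Arguments. Unset Strict Implicit.

Section V.
Variable F : finFieldType.

Definition c5 (x1 x2 x3 x4 x5 : F) : 'cV[F]_5 :=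
  \col_(i < 5) nth 0 [:: x1; x2; x3; x4; x5] i.

Lemma c5E1 x1 x2 x3 x4 x5 : X 1 (c5 x1 x2 x3 x4 x5) = x1.
Proof. by rewrite /X mxE inordK. Qed.
Lemma c5E2 x1 x2 x3 x4 x5 : X 2 (c5 x1 x2 x3 x4 x5) = x2.
Proof. by rewrite /X mxE inordK. Qed.
Lemma c5E3 x1 x2 x3 x4 x5 : X 3 (c5 x1 x2 x3 x4 x5) = x3.
Proof. by rewrite /X mxE inordK. Qed.
Lemma c5E4 x1 x2 x3 x4 x5 : X 4 (c5 x1 x2 x3 x4 x5) = x4.
Proof. by rewrite /X mxE inordK. Qed.
Lemma c5E5 x1 x2 x3 x4 x5 : X 5 (c5 x1 x2 x3 x4 x5) = x5.
Proof. by rewrite /X mxE inordK. Qed.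
Definition c5E := (c5E1, c5E2, c5E3, c5E4, c5E5).

Lemma c5_eta (v : 'cV[F]_5) : v = c5 (X 1 v) (X 2 v) (X 3 v) (X 4 v) (X 5 v).
Proof.
apply/matrixP => i j; rewrite ord1 mxE /X.
case: i => [[|[|[|[|[|i]]]]] Hi] //=; congr (v _ _); apply/val_inj; by rewrite /= inordK.
Qed.

Lemma c5_inj x1 x2 x3 x4 x5 y1 y2 y3 y4 y5 :
  c5 x1 x2 x3 x4 x5 = c5 y1 y2 y3 y4 y5 ->
  [/\ x1 = y1, x2 = y2, x3 = y3, x4 = y4 & x5 = y5].
Proof.
move=> E; split.
- by rewrite -(c5E1 x1 x2 x3 x4 x5) E c5E.
- by rewrite -(c5E2 x1 x2 x3 x4 x5) E c5E.
- by rewrite -(c5E3 x1 x2 x3 x4 x5) E c5E.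
- by rewrite -(c5E4 x1 x2 x3 x4 x5) E c5E.
- by rewrite -(c5E5 x1 x2 x3 x4 x5) E c5E.
Qed.

Lemma c5_ind (P : 'cV[F]_5 -> Prop) :
  (forall x1 x2 x3 x4 x5, P (c5 x1 x2 x3 x4 x5)) -> forall v, P v.
Proof. by move=> H v; rewrite (c5_eta v). Qed.

Lemma c5Z k x1 x2 x3 x4 x5 :
  k *: c5 x1 x2 x3 x4 x5 = c5 (k * x1) (k * x2) (k * x3) (k * x4) (k * x5).
Proof.
apply/matrixP => i j; rewrite !mxE.
by case: i => [[|[|[|[|[|i]]]]] Hi].
Qed.

Lemma c5_eq0 x1 x2 x3 x4 x5 :
  (c5 x1 x2 x3 x4 x5 == 0) = [&& x1 == 0, x2 == 0, x3 == 0, x4 == 0 & x5 == 0].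
Proof.
apply/eqP/idP.
  move=> E; have : c5 x1 x2 x3 x4 x5 = c5 0 0 0 0 0.
    rewrite E; apply/matrixP => i j; rewrite !mxE.
    by case: i => [[|[|[|[|[|i]]]]] Hi].
  by case/c5_inj => -> -> -> -> ->; rewrite !eqxx.
case/and5P => /eqP-> /eqP-> /eqP-> /eqP-> /eqP->.
apply/matrixP => i j; rewrite !mxE.
by case: i => [[|[|[|[|[|i]]]]] Hi].
Qed.

Lemma Mc5 a b c r s t x1 x2 x3 x4 x5 :
  M a b c r s t *m c5 x1 x2 x3 x4 x5 =
  c5 (x1 + r * x3 + (r ^+ 2 - a * r + s) * x4 + t * x5)
     (x2 + s * x3 + (2 * r * s - t) * x4 + (s ^+ 2 + b * s - c * r) * x5)
     (x3 + 2 * r * x4 + 2 * s * x5) x4 x5.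
Proof.
apply/matrixP => i j; rewrite !mxE !big_ord_recr big_ord0 /= !mxE /=.
case: i => [[|[|[|[|[|i]]]]] Hi] //=; ring.
Qed.


Lemma mem_pt (u v : 'cV[F]_5) : (u \in pt v) = [exists k : F, (k != 0) && (u == k *: v)].
Proof.
apply/imsetP/existsP => [[k]|[k /andP[k0 /eqP->]]].
  by rewrite inE => k0 ->; exists k; rewrite k0 eqxx.
by exists k; rewrite ?inE.
Qed.

Lemma pt_self (v : 'cV[F]_5) : v \in pt v.
Proof. by rewrite mem_pt; apply/existsP; exists 1; rewrite oner_eq0 scale1r eqxx. Qed.

Lemma ptZ k (v : 'cV[F]_5) : k != 0 -> pt (k *: v) = pt v.
Proof.
move=> k0; apply/setP => u; rewrite !mem_pt; apply/existsP/existsP.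
  case=> l /andP[l0 /eqP->]; exists (l * k); rewrite mulf_neq0 //= scalerA //.
case=> l /andP[l0 /eqP->]; exists (l / k); rewrite mulf_neq0 ?invr_eq0 //=.
by rewrite scalerA divfK.
Qed.

Lemma pt_eq (u v : 'cV[F]_5) : pt u = pt v -> exists2 k, k != 0 & v = k *: u.
Proof.
move=> E; have := pt_self v; rewrite -E mem_pt => /existsP[k /andP[k0 /eqP->]].
by exists k.
Qed.

Lemma PGpointsP (P : {set 'cV[F]_5}) :
  P \in PGpoints F -> exists2 v, v != 0 & P = pt v.
Proof. by case/imsetP => v; rewrite inE => v0 ->; exists v. Qed.

Lemma pt_PG (v : 'cV[F]_5) : v != 0 -> pt v \in PGpoints F.
Proof. by move=> v0; apply/imsetP; exists v; rewrite ?inE. Qed.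

Lemma pt_PG0 (v : 'cV[F]_5) : (pt v \in PGpoints F) = (v != 0).
Proof.
apply/idP/idP; last exact: pt_PG.
case/PGpointsP => u u0 /pt_eq [k k0 E].
apply/negP => /eqP v0; move: E; rewrite v0 scaler0 => E.
by move: u0; rewrite -E eqxx.
Qed.

Definition homog (Pr : pred 'cV[F]_5) := forall k v, k != 0 -> Pr (k *: v) = Pr v.

Lemma mem_ptsOf (Pr : pred 'cV[F]_5) v : homog Pr ->
  (pt v \in ptsOf Pr) = (v != 0) && Pr v.
Proof.
move=> hP; rewrite /ptsOf inE pt_PG0; case: (v != 0) => //=.
apply/forallP/idP => [/(_ v)|Hv u].
  by rewrite pt_self.
apply/implyP; rewrite mem_pt => /existsP[k /andP[k0 /eqP->]].
by rewrite hP.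
Qed.

Lemma ptsOf_PG (Pr : pred 'cV[F]_5) P : P \in ptsOf Pr -> P \in PGpoints F.
Proof. by rewrite inE => /andP[]. Qed.

Lemma actPt_pt g (v : 'cV[F]_5) : actPt g (pt v) = pt (g *m v).
Proof.
rewrite /actPt /pt -imset_comp; apply: eq_imset => k /=.
by rewrite scalemxAr.
Qed.

Lemma orbitG_pt a b c (v : 'cV[F]_5) :
  orbitG a b c (pt v) = [set pt (M a b c x.1.1 x.1.2 x.2 *m v) | x : F * F * F].
Proof. by apply: eq_imset => x; rewrite actPt_pt. Qed.

End V.

Lemma surj_b (F : finFieldType) (a b c al be : F) :
  (2 : F) != 0 -> (forall m : F, m ^+ 3 + a * m ^+ 2 + b * m + c != 0) ->
  be != 0 ->
  forall x1 x2 x3 z1 z2 z3, exists r s t,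
    M a b c r s t *m c5 x1 x2 x3 al be = c5 z1 z2 z3 al be.
Proof.
move=> h2 hN hb x1 x2 x3 z1 z2 z3.
pose m := al / be.
pose u := (z3 / be - x3 / be) / 2.
pose t0 := z1 / be - x1 / be - u * m.
pose X20 := x2 / be + u * (x3 / be) - t0 * m + u ^+ 2 + b * u.
pose N := m ^+ 3 + a * m ^+ 2 + b * m + c.
pose r := (X20 - z2 / be) / N.
pose s := u - r * m.
pose t := z1 / be - x1 / be - r * (x3 / be) - (r ^+ 2 - a * r + s) * m.
have hNb : al ^+ 3 + a * al ^+ 2 * be + b * al * be ^+ 2 + c * (be ^+ 2 * be) != 0.
  have -> : al ^+ 3 + a * al ^+ 2 * be + b * al * be ^+ 2 + c * (be ^+ 2 * be)
     = be ^+ 3 * (m ^+ 3 + a * m ^+ 2 + b * m + c) by rewrite /m; field.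
  by rewrite mulf_neq0 ?expf_neq0.
exists r, s, t; rewrite Mc5; congr c5.
- rewrite /t /s /r /N /X20 /t0 /u /m; field; by rewrite ?h2 ?hb ?hNb.
- rewrite /t /s /r /N /X20 /t0 /u /m; field; by rewrite ?h2 ?hb ?hNb.
- rewrite /t /s /r /N /X20 /t0 /u /m; field; by rewrite ?h2 ?hb ?hNb.
Qed.

Lemma surj_a (F : finFieldType) (a b c al : F) :
  (2 : F) != 0 -> al != 0 ->
  forall x1 x2 x3 z1 z2 z3, exists r s t,
    M a b c r s t *m c5 x1 x2 x3 al 0 = c5 z1 z2 z3 al 0.
Proof.
move=> h2 ha x1 x2 x3 z1 z2 z3.
pose r := (z3 / al - x3 / al) / 2.
pose s := z1 / al - x1 / al - r * (x3 / al) - r ^+ 2 + a * r.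
pose t := x2 / al + s * (x3 / al) + 2 * r * s - z2 / al.
exists r, s, t; rewrite Mc5; congr c5.
- rewrite /t /s /r; field; by rewrite ?h2 ?ha.
- rewrite /t /s /r; field; by rewrite ?h2 ?ha.
- rewrite /t /s /r; field; by rewrite ?h2 ?ha.
Qed.

Lemma surj (F : finFieldType) (a b c al be : F) :
  (2 : F) != 0 -> (forall m : F, m ^+ 3 + a * m ^+ 2 + b * m + c != 0) ->
  (al != 0) || (be != 0) ->
  forall x1 x2 x3 z1 z2 z3, exists r s t,
    M a b c r s t *m c5 x1 x2 x3 al be = c5 z1 z2 z3 al be.
Proof.
move=> h2 hN; have [->|hb] := eqVneq be 0; last by move=> _; apply: surj_b.
rewrite orbF => ha; exact: surj_a.
Qed.


Section D.
Variable F : finFieldType.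
Implicit Types (v : 'cV[F]_5).

Lemma XZ i k v : X i (k *: v) = k * X i v.
Proof. by rewrite /X mxE. Qed.

Definition ellP : pred 'cV[F]_5 :=
  fun v => [&& X 3 v == 0, X 4 v == 0 & X 5 v == 0].
Definition piP : pred 'cV[F]_5 := fun v => (X 4 v == 0) && (X 5 v == 0).

Definition solid2 (w : F) (j : 'I_#|F|.+1) (y4 y5 : F) : bool :=
  if ((j : nat) < #|F| - 1)%N then y4 == w ^+ j * y5
  else if (j : nat) == (#|F| - 1)%N then y4 == 0 else y5 == 0.
Definition solidP w j : pred 'cV[F]_5 := fun v => solid2 w j (X 4 v) (X 5 v).

Lemma Pisolid_ptsOf w j : Pisolid w j = ptsOf (solidP w j).
Proof. by rewrite /Pisolid /solidP /solid2; case: ifP => _ //; case: ifP. Qed.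

Lemma mulIeq k (x y : F) : k != 0 -> (k * x == k * y) = (x == y).
Proof. by move=> k0; apply: inj_eq; apply: mulfI. Qed.

Lemma homog_ell : homog ellP.
Proof. by move=> k v k0; rewrite /ellP !XZ !mulf_eq0 (negbTE k0). Qed.
Lemma homog_pi : homog piP.
Proof. by move=> k v k0; rewrite /piP !XZ !mulf_eq0 (negbTE k0). Qed.
Lemma homog_solid w j : homog (solidP w j).
Proof.
move=> k v k0; rewrite /solidP /solid2 !XZ !mulf_eq0 (negbTE k0) /=.
by rewrite mulrCA mulIeq.
Qed.

Lemma mem_ell v : (pt v \in ellLine F) = (v != 0) && ellP v.
Proof. exact: (mem_ptsOf v homog_ell). Qed.
Lemma mem_pi v : (pt v \in piPlane F) = (v != 0) && piP v.
Proof. exact: (mem_ptsOf v homog_pi). Qed.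
Lemma mem_solid w j v : (pt v \in Pisolid w j) = (v != 0) && solidP w j v.
Proof. rewrite Pisolid_ptsOf; exact: (mem_ptsOf v (homog_solid w j)). Qed.

Lemma ell_PG P : P \in ellLine F -> P \in PGpoints F.
Proof. exact: ptsOf_PG. Qed.
Lemma pi_PG P : P \in piPlane F -> P \in PGpoints F.
Proof. exact: ptsOf_PG. Qed.
Lemma solid_PG w j P : P \in Pisolid w j -> P \in PGpoints F.
Proof. rewrite Pisolid_ptsOf; exact: ptsOf_PG. Qed.

Lemma destr_pt P : P \in PGpoints F ->
  exists x1 x2 x3 x4 x5, c5 x1 x2 x3 x4 x5 != 0 /\ P = pt (c5 x1 x2 x3 x4 x5).
Proof.
case/PGpointsP => u u0 ->; rewrite (c5_eta u) in u0 *.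
by do 5 eexists; split; first exact: u0.
Qed.

Lemma solid_scale w j y4 y5 al be :
  solid2 w j y4 y5 -> solid2 w j al be ->
  (y4 != 0) || (y5 != 0) -> (al != 0) || (be != 0) ->
  exists2 k, k != 0 & (k * y4 = al /\ k * y5 = be).
Proof.
rewrite /solid2; case: ifP => _.
  move=> /eqP-> /eqP->.
  have [->|y50] := eqVneq y5 0; first by rewrite mulr0 eqxx.
  have [->|be0] := eqVneq be 0; first by rewrite mulr0 eqxx.
  move=> _ _; exists (be / y5); first by rewrite mulf_neq0 ?invr_eq0.
  by split; [rewrite mulrCA divfK | rewrite divfK].
case: ifP => _.
  move=> /eqP-> /eqP->; rewrite !eqxx /= => y50 be0.
  exists (be / y5); first by rewrite mulf_neq0 ?invr_eq0.
  by split; [rewrite mulr0 | rewrite divfK].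
move=> /eqP-> /eqP->; rewrite !eqxx !orbF => y40 al0.
exists (al / y4); first by rewrite mulf_neq0 ?invr_eq0.
by split; [rewrite divfK | rewrite mulr0].
Qed.

Variables (a b c : F).

Lemma orbit_ell x1 x2 :
  orbitG a b c (pt (c5 x1 x2 0 0 0)) = [set pt (c5 x1 x2 0 0 0)].
Proof.
rewrite orbitG_pt; apply/setP => Q; rewrite inE; apply/imsetP/eqP.
  by case=> x _ ->; rewrite Mc5 !mulr0 !addr0.
by move=> ->; exists (0, 0, 0); rewrite // Mc5 !mulr0 !addr0.
Qed.

Lemma orbit_pi x1 x2 x3 : x3 != 0 ->
  orbitG a b c (pt (c5 x1 x2 x3 0 0)) = piPlane F :\: ellLine F.
Proof.
move=> x30; rewrite orbitG_pt; apply/setP => Q; apply/imsetP/idP.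
  case=> x _ ->; rewrite Mc5 !mulr0 !addr0 inE mem_pi mem_ell /piP /ellP !c5E.
  by rewrite c5_eq0 (negbTE x30) !eqxx !andbF.
rewrite inE => /andP[nQ Qpi]; have [y1 [y2 [y3 [y4 [y5 [u0 Qu]]]]]] := destr_pt (pi_PG Qpi).
move: nQ Qpi; rewrite Qu mem_pi mem_ell /piP /ellP !c5E u0 /=.
move=> + /andP[/eqP y40 /eqP y50]; rewrite y40 y50 !eqxx !andbT => y30.
subst y4 y5.
pose k := x3 / y3.
have k0 : k != 0 by rewrite mulf_neq0 ?invr_eq0.
exists (((k * y1 - x1) / x3, (k * y2 - x2) / x3), 0) => //.
rewrite -(ptZ _ k0) c5Z /= Mc5 !mulr0 !addr0; congr (pt (c5 _ _ _ _ _)).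
- by field.
- by field.
- by rewrite /k divfK.
Qed.

Hypotheses (h2 : (2 : F) != 0) (hN : forall m : F, m ^+ 3 + a * m ^+ 2 + b * m + c != 0).

Lemma orbit_solid w j x1 x2 x3 al be : solid2 w j al be -> (al != 0) || (be != 0) ->
  orbitG a b c (pt (c5 x1 x2 x3 al be)) = Pisolid w j :\: piPlane F.
Proof.
move=> Hs nz; rewrite orbitG_pt; apply/setP => Q; apply/imsetP/idP.
  case=> x _ ->; rewrite Mc5 inE mem_pi mem_solid /piP /solidP !c5E Hs.
  rewrite c5_eq0; move: nz; by case: (al == 0); case: (be == 0); rewrite /= ?andbF.
rewrite inE => /andP[nQ QS]; have [y1 [y2 [y3 [y4 [y5 [u0 Qu]]]]]] := destr_pt (solid_PG QS).
move: nQ QS; rewrite Qu mem_pi mem_solid /piP /solidP !c5E u0 /= => ny Hy.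
have ny' : (y4 != 0) || (y5 != 0) by rewrite -negb_and.
have [k k0 [E4 E5]] := solid_scale Hy Hs ny' nz.
have [r [s [t E]]] := @surj _ a b c al be h2 hN nz x1 x2 x3 (k * y1) (k * y2) (k * y3).
exists ((r, s), t) => //=.
by rewrite -(ptZ _ k0) c5Z E E4 E5.
Qed.

End D.


Section E.
Variable F : finFieldType.
Implicit Types (v : 'cV[F]_5).
Variable w : F.
Hypothesis Hw : (#|F|.-1).-primitive_root w.

Lemma q_gt1 : (1 < #|F|)%N.
Proof. exact: finNzRing_gt1. Qed.

Lemma w_exp_neq0 k : w ^+ k != 0.
Proof.
rewrite expf_neq0 //; apply/negP => /eqP w0.
have := prim_expr_order Hw; rewrite w0 expr0n.
have -> : (#|F|.-1 == 0)%N = false by have := q_gt1; lia.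
by move/eqP; rewrite eq_sym oner_eq0.
Qed.

Definition alj (j : 'I_#|F|.+1) : F :=
  if ((j : nat) < #|F| - 1)%N then w ^+ j else if (j : nat) == (#|F| - 1)%N then 0 else 1.
Definition bej (j : 'I_#|F|.+1) : F :=
  if ((j : nat) < #|F| - 1)%N then 1 else if (j : nat) == (#|F| - 1)%N then 1 else 0.

Lemma rep_solid j : solid2 w j (alj j) (bej j).
Proof.
rewrite /solid2 /alj /bej; case: (j < _)%N => /=; first by rewrite mulr1.
by case: ((j : nat) == (#|F| - 1)%N).
Qed.

Lemma rep_nz j : (alj j != 0) || (bej j != 0).
Proof.
rewrite /alj /bej; case: (j < _)%N => /=; first by rewrite oner_eq0 orbT.
by case: ((j : nat) == (#|F| - 1)%N); rewrite oner_eq0 ?orbT.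
Qed.

Lemma nat_aux (q k j : nat) : (1 < q -> k < q.+1 -> j < q.+1 -> q - 1 <= k -> q - 1 <= j ->
  k <> q - 1 -> j <> q - 1 -> k = j)%N.
Proof. lia. Qed.

Lemma nat_aux2 (q : nat) : (1 < q)%N -> q <> (q - 1)%N.
Proof. lia. Qed.

Lemma rep_uniq k j : solid2 w k (alj j) (bej j) -> k = j.
Proof.
have q1 := q_gt1; have hk := ltn_ord k; have hj := ltn_ord j.
rewrite /solid2 /alj /bej => H; apply: val_inj => /=.
move: H; case: (ltnP k (#|F| - 1)) => hk'; case: (ltnP j (#|F| - 1)) => hj'.
- rewrite mulr1 eq_sym (eq_prim_root_expr Hw) => /eqP.
  by rewrite !modn_small //; lia.
- case: ((j : nat) == (#|F| - 1)%N); first by rewrite mulr1 eq_sym (negbTE (w_exp_neq0 _)).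
  by rewrite mulr0 oner_eq0.
- by case: ((k : nat) == (#|F| - 1)%N); rewrite ?(negbTE (w_exp_neq0 _)) // oner_eq0.
- case ek: ((k : nat) == (#|F| - 1)%N); case ej: ((j : nat) == (#|F| - 1)%N); rewrite ?oner_eq0 ?eqxx //.
  by move: ek ej => /eqP -> /eqP ->.
  move: ek ej => /negbT/eqP ek /negbT/eqP ej T; exact: (nat_aux q1 hk hj hk' hj' ek ej).
Qed.

Lemma exists_solid y4 y5 : exists j, solid2 w j y4 y5.
Proof.
have q1 := q_gt1.
have [y50|y50] := eqVneq y5 0.
  exists ord_max; rewrite /solid2 /=.
  rewrite ltnNge leq_subr /=.
  have -> : (#|F| == #|F| - 1)%N = false by apply/negbTE/eqP; apply: nat_aux2.
  by rewrite y50.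
have [y40|y40] := eqVneq y4 0.
  exists (inord (#|F| - 1)); rewrite /solid2 inordK; last by lia.
  by rewrite ltnn eqxx y40.
pose m := y4 / y5.
have m0 : m != 0 by rewrite mulf_neq0 ?invr_eq0.
have mq : m ^+ #|F|.-1 = 1.
  apply: (mulIf m0); rewrite mul1r -exprSr prednK ?expf_card //; lia.
have [i Ei] := prim_rootP Hw mq.
exists (inord i); rewrite /solid2 inordK; last by have := ltn_ord i; lia.
have -> : (i < #|F| - 1)%N by have := ltn_ord i; lia.
by rewrite -Ei /m divfK.
Qed.

End E.


Section G.
Variable F : finFieldType.
Implicit Types (v : 'cV[F]_5).

Lemma pt_inj_coord i u v : pt u = pt v -> X i u = X i v -> X i u != 0 -> u = v.
Proof.
move=> /pt_eq [k k0 ->]; rewrite XZ => E nz.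
have k1 : k = 1 by apply: (mulIf nz); rewrite mul1r.
by rewrite k1 scale1r.
Qed.

Definition ellpar (o : option F) : {set 'cV[F]_5} :=
  if o is Some x then pt (c5 x 1 0 0 0) else pt (c5 1 0 0 0 0).

Lemma ell_image : ellLine F = [set ellpar o | o : option F].
Proof.
apply/setP => P; apply/idP/imsetP.
  move=> HP; have [y1 [y2 [y3 [y4 [y5 [u0 Pu]]]]]] := destr_pt (ell_PG HP).
  move: HP; rewrite Pu mem_ell /ellP !c5E u0 /= => /and3P[/eqP e3 /eqP e4 /eqP e5].
  subst y3 y4 y5.
  have [y20|y20] := eqVneq y2 0.
    subst y2; move: u0; rewrite c5_eq0 !eqxx !andbT => y10.
    exists None => //=; rewrite -(ptZ (c5 1 0 0 0 0) y10) c5Z !mulr0 mulr1 //.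
  exists (Some (y1 / y2)) => //=; rewrite -(ptZ (c5 (y1 / y2) 1 0 0 0) y20) c5Z !mulr0 mulr1.
  by rewrite mulrC divfK.
case=> o _ ->; case: o => [x|] /=.
  by rewrite mem_ell /ellP !c5E c5_eq0 oner_eq0 !eqxx !andbF.
by rewrite mem_ell /ellP !c5E c5_eq0 oner_eq0 !eqxx.
Qed.

Lemma card_ell : #|ellLine F| = #|F|.+1.
Proof.
rewrite ell_image card_imset ?card_option //.
move=> [x|] [y|] /=.
- move=> E; have := pt_inj_coord (i:=2) E; rewrite !c5E oner_eq0 => /(_ erefl isT).
  by case/c5_inj => ->.
- move=> E; have := pt_eq E => -[k k0]; rewrite c5Z => /c5_inj [_ ]; rewrite mulr1.
  by move=> /eqP; rewrite eq_sym (negbTE k0).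
- move=> E; have := pt_eq E => -[k k0]; rewrite c5Z => /c5_inj [_ ]; rewrite mulr0.
  by move=> /eqP; rewrite oner_eq0.
- by [].
Qed.

Lemma pi_image : piPlane F :\: ellLine F = [set pt (c5 x.1 x.2 1 0 0) | x : F * F].
Proof.
apply/setP => P; apply/idP/imsetP.
  rewrite inE => /andP[nP HP]; have [y1 [y2 [y3 [y4 [y5 [u0 Pu]]]]]] := destr_pt (pi_PG HP).
  move: nP HP; rewrite Pu mem_ell mem_pi /ellP /piP !c5E u0 /= => + /andP[/eqP e4 /eqP e5].
  rewrite e4 e5 !eqxx !andbT => y30.
  exists (y1 / y3, y2 / y3) => //=; rewrite -(ptZ (c5 (y1 / y3) (y2 / y3) 1 0 0) y30) c5Z !mulr0 mulr1.
  by rewrite ![y3 * _]mulrC !divfK.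
case=> x _ ->.
by rewrite inE mem_ell mem_pi /ellP /piP !c5E c5_eq0 oner_eq0 !eqxx !andbF.
Qed.

Lemma card_pi : #|piPlane F :\: ellLine F| = (#|F| ^ 2)%N.
Proof.
rewrite pi_image card_imset ?card_prod; first by rewrite !expnS expn0 muln1 ?mulnA.
move=> [x1 x2] [y1 y2] E; have := pt_inj_coord (i:=3) E; rewrite !c5E oner_eq0 => /(_ erefl isT).
by case/c5_inj => /= -> ->.
Qed.

Variable w : F.
Hypothesis Hw : (#|F|.-1).-primitive_root w.

Lemma solid_image j : Pisolid w j :\: piPlane F =
  [set pt (c5 x.1.1 x.1.2 x.2 (alj w j) (bej j)) | x : F * F * F].
Proof.
apply/setP => P; apply/idP/imsetP.
  rewrite inE => /andP[nP HP]; have [y1 [y2 [y3 [y4 [y5 [u0 Pu]]]]]] := destr_pt (solid_PG HP).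
  move: nP HP; rewrite Pu mem_solid mem_pi /solidP /piP !c5E u0 /= => ny Hy.
  have ny' : (y4 != 0) || (y5 != 0) by rewrite -negb_and.
  have [k k0 [E4 E5]] := solid_scale Hy (rep_solid w j) ny' (rep_nz w j).
  exists ((k * y1, k * y2), k * y3) => //=.
  by rewrite -(ptZ _ k0) c5Z E4 E5.
case=> x _ ->.
rewrite inE mem_solid mem_pi /solidP /piP !c5E rep_solid c5_eq0.
by have := rep_nz w j; case: (alj w j == 0); case: (bej j == 0); rewrite /= ?andbF.
Qed.

Lemma card_solid j : #|Pisolid w j :\: piPlane F| = (#|F| ^ 3)%N.
Proof.
rewrite solid_image card_imset ?card_prod; first by rewrite !expnS expn0 muln1 ?mulnA.
move=> [[x1 x2] x3] [[y1 y2] y3] E.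
have [nz4|z4] := eqVneq (alj w j) 0.
  have := pt_inj_coord (i:=5) E; rewrite !c5E => /(_ erefl).
  have := rep_nz w j; rewrite nz4 eqxx /= => -> /(_ isT).
  by case/c5_inj => /= -> -> ->.
have := pt_inj_coord (i:=4) E; rewrite !c5E => /(_ erefl z4).
by case/c5_inj => /= -> -> ->.
Qed.

End G.

Lemma cardU_d (T : finType) (S1 S2 : {set T}) :
  (forall x, x \in S1 -> x \notin S2) -> #|S1 :|: S2| = (#|S1| + #|S2|)%N.
Proof.
move=> H; rewrite cardsU; suff -> : S1 :&: S2 = set0 by rewrite cards0 subn0.
apply/setP => x; rewrite !inE; case: (boolP (x \in S1)) => //= /H /negbTE ->.
by [].
Qed.

Lemma pow_facts q : (1 < q)%N -> [/\ (q ^ 2 != 1), (q ^ 3 != 1) & (q ^ 3 != q ^ 2)]%N.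
Proof. by move=> hq; rewrite !expnS expn0 !muln1; split; apply/eqP; nia. Qed.

Unset Implicit Arguments.
Set Strict Implicit.

Theorem lemma2p3 (F : finFieldType) (p h : nat)
  (Hp : prime p) (Hodd : odd p) (Hh : (0 < h)%N) (HF : #|F| = (p ^ h)%N)
  (w : F) (Hw : (#|F|.-1).-primitive_root w)
  (a b c : F)
  (Hirr : irreducible_poly ('X^3 + a%:P * 'X^2 + b%:P * 'X + c%:P)) :
  let q := #|F| in
  #|orbitsG a b c| = (2 * q + 3)%N /\
  orbitsG a b c =
    [set [set P] | P in ellLine F]
    :|: [set piPlane F :\: ellLine F]
    :|: [set Pisolid w i :\: piPlane F | i : 'I_q.+1] /\
  #|ellLine F| = q.+1 /\
  (forall P, P \in ellLine F -> #|[set P]| = 1%N) /\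
  #|[set Pisolid w i :\: piPlane F | i : 'I_q.+1]| = q.+1 /\
  #|piPlane F :\: ellLine F| = (q ^ 2)%N /\
  (forall i : 'I_q.+1, #|Pisolid w i :\: piPlane F| = (q ^ 3)%N).
Proof.
move=> q.
have h2 : (2 : F) != 0 := @two_neq0 F p h Hp Hodd HF.
have hN : forall m : F, m ^+ 3 + a * m ^+ 2 + b * m + c != 0.
  by move=> m; apply: cubic_neq0.
have q1 : (1 < q)%N := q_gt1 F.
have [pf1 pf2 pf3] := @pow_facts q q1.
have EQ : orbitsG a b c =
    [set [set P] | P in ellLine F]
    :|: [set piPlane F :\: ellLine F]
    :|: [set Pisolid w i :\: piPlane F | i : 'I_q.+1].
  apply/setP => O; apply/imsetP/idP.
    case=> P HP ->; have [x1 [x2 [x3 [x4 [x5 [u0 ->]]]]]] := destr_pt HP.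
    have [/andP[/eqP e4 /eqP e5] | n45] := boolP ((x4 == 0) && (x5 == 0)).
      subst x4 x5; have [e3|n3] := eqVneq x3 0.
        subst x3; rewrite orbit_ell !in_setU; apply/orP; left; apply/orP; left.
        apply/imsetP; exists (pt (c5 x1 x2 0 0 0)) => //.
        by rewrite mem_ell u0 /ellP !c5E eqxx.
      by rewrite orbit_pi // !in_setU in_set1 eqxx orbT.
    have [j Hj] := exists_solid Hw x4 x5.
    have nz : (x4 != 0) || (x5 != 0) by rewrite -negb_and.
    rewrite (orbit_solid h2 hN x1 x2 x3 Hj nz) !in_setU; apply/orP; right.
    by apply/imsetP; exists j.
  rewrite !in_setU => /orP[/orP[HA|HB]|HC].
  - case/imsetP: HA => P HP ->; exists P; first exact: ell_PG.
    have [y1 [y2 [y3 [y4 [y5 [u0 Pu]]]]]] := destr_pt (ell_PG HP).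
    move: HP; rewrite Pu mem_ell /ellP !c5E u0 /= => /and3P[/eqP e3 /eqP e4 /eqP e5].
    by subst y3 y4 y5; rewrite orbit_ell.
  - move: HB; rewrite in_set1 => /eqP ->; exists (pt (c5 0 0 1 0 0)).
      by rewrite pt_PG0 c5_eq0 oner_eq0 !eqxx.
    by rewrite orbit_pi // oner_eq0.
  - case/imsetP: HC => j _ ->; exists (pt (c5 0 0 0 (alj w j) (bej j))).
      rewrite pt_PG0 c5_eq0 !eqxx /=.
      by have := rep_nz w j; case: (alj w j == 0); case: (bej j == 0).
    by rewrite (orbit_solid h2 hN 0 0 0 (rep_solid w j) (rep_nz w j)).
have cardC : #|[set Pisolid w i :\: piPlane F | i : 'I_q.+1]| = q.+1.
  rewrite card_imset ?card_ord // => j k E.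
  have : pt (c5 0 0 0 (alj w j) (bej j)) \in Pisolid w k :\: piPlane F.
    by rewrite -E solid_image //; apply/imsetP; exists (0, 0, 0).
  rewrite inE mem_solid /solidP !c5E => /andP[_ /andP[_ Hk]].
  by rewrite (rep_uniq Hw Hk).
have cardA : #|[set [set P] | P in ellLine F]| = q.+1.
  by rewrite card_imset ?card_ell //; exact: set1_inj.
split.
  rewrite EQ cardU_d; last first.
    move=> X; rewrite in_setU => /orP[/imsetP[P _ ->]|].
      apply/negP => /imsetP[j _ E]; move: (card_solid w j); rewrite -E cards1.
      by move=> E1; move: pf2; rewrite -/q -E1 eqxx.
    rewrite in_set1 => /eqP ->; apply/negP => /imsetP[j _ E].
    move: (card_solid w j); rewrite -E card_pi => E1; move: pf3; by rewrite -/q E1 eqxx.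
  rewrite cardU_d; last first.
    move=> X /imsetP[P _ ->]; rewrite in_set1; apply/negP => /eqP E.
    move: (@card_pi F); rewrite -E cards1 => E1; move: pf1; by rewrite -/q -E1 eqxx.
  rewrite cardA cards1 cardC; lia.
split; first exact: EQ.
split; first exact: card_ell.
split; first by move=> P _; rewrite cards1.
split; first exact: cardC.
split; first exact: card_pi.
move=> i; exact: card_solid w i.
Qed.
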